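(* If $g(n)$ is bounded by a constant, then the smallest constant $C$ with $g(n)\le C$ for all $n$ satisfies $C\le 4$; the same holds for $h(n)$. Consequently, if $f(n)$ is bounded by a constant, then the smallest such constant is at most $16$.
   Context: For a digraph $D$, $\chi(D)$ is the chromatic number of its underlying graph; $D^{-1}$ is $D$ with arcs reversed; $D_1\times D_2$ has vertex set $V(D_1)\times V(D_2)$ and arc $(x,y)\to(x',y')$ iff $(x,x')$ is an arc of $D_1$ and $(y,y')$ an arc of $D_2$ (graph product $G\times H$ analogously with edges). $f(n)=\min\{\chi(G\times H):\chi(G),\chi(H)\ge n\}$ over graphs; $g(n)=\min\{\chi(D_1\times D_2):\chi(D_1),\chi(D_2)\ge n\}$ and $h(n)=\min\{\max\{\chi(D_1\times D_2),\chi(D_1\times D_2^{-1})\}:\chi(D_1),\chi(D_2)\ge n\}$ over digraphs (digons allowed). *)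

(* Defs.v *)
From mathcomp Require Import all_boot.
Set Implicit Arguments. Unset Strict Implicit. Unset Printing Implicit Defensive.

Definition ucolorable (T : finType) (e : rel T) (k : nat) : bool :=
  [exists c : {ffun T -> 'I_k},
     [forall x, forall y, (e x y || e y x) ==> (c x != c y)]].

Lemma ucolorable_card (T : finType) (e : rel T) :
  irreflexive e -> ucolorable e #|T|.
Proof.
move=> irr; apply/existsP; exists [ffun x => enum_rank x].
apply/forallP=> x; apply/forallP=> y; apply/implyP=> exy.
rewrite !ffunE; apply/negP=> /eqP /enum_rank_inj exy'.
by move: exy; rewrite exy' orbb irr.
Qed.

Definition uchi (T : finType) (e : rel T) (irr : irreflexive e) : nat :=
  ex_minn (ex_intro (fun k => ucolorable e k) _ (ucolorable_card irr)).

(* Finite loopless digraphs (digons allowed). *)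
Record digraph := Digraph {
  dvert : finType;
  darc : rel dvert;
  darc_irr : irreflexive darc }.

Record graph := Graph {
  gvert : finType;
  gadj : rel gvert;
  gadj_irr : irreflexive gadj;
  gadj_sym : symmetric gadj }.

Definition dchi (D : digraph) : nat := uchi (@darc_irr D).
Definition gchi (G : graph) : nat := uchi (@gadj_irr G).

Definition prod_rel (T1 T2 : finType) (e1 : rel T1) (e2 : rel T2) :
  rel (T1 * T2)%type := fun u v => e1 u.1 v.1 && e2 u.2 v.2.

Lemma prod_rel_irr (T1 T2 : finType) (e1 : rel T1) (e2 : rel T2) :
  irreflexive e1 -> irreflexive (prod_rel e1 e2).
Proof. by move=> h u; rewrite /prod_rel h. Qed.

Lemma prod_rel_sym (T1 T2 : finType) (e1 : rel T1) (e2 : rel T2) :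
  symmetric e1 -> symmetric e2 -> symmetric (prod_rel e1 e2).
Proof. by move=> h1 h2 u v; rewrite /prod_rel h1 h2. Qed.

Definition dprod (D1 D2 : digraph) : digraph :=
  @Digraph (dvert D1 * dvert D2)%type (prod_rel (@darc D1) (@darc D2))
    (prod_rel_irr (@darc D2) (@darc_irr D1)).

Lemma rev_irr (T : finType) (e : rel T) :
  irreflexive e -> irreflexive (fun x y => e y x).
Proof. by []. Qed.
Definition drev (D : digraph) : digraph :=
  @Digraph (dvert D) (fun x y => darc y x) (rev_irr (@darc_irr D)).

Definition gprod (G H : graph) : graph :=
  @Graph (gvert G * gvert H)%type (prod_rel (@gadj G) (@gadj H))
    (prod_rel_irr (@gadj H) (@gadj_irr G))
    (prod_rel_sym (@gadj_sym G) (@gadj_sym H)).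

(* "f(n) <= C", "g(n) <= C", "h(n) <= C": the minimum over the (nonempty)
   class is <= C iff some member of the class has value <= C. *)
Definition f_le (n C : nat) : Prop :=
  exists G H : graph, n <= gchi G /\ n <= gchi H /\ gchi (gprod G H) <= C.
Definition g_le (n C : nat) : Prop :=
  exists D1 D2 : digraph, n <= dchi D1 /\ n <= dchi D2 /\
    dchi (dprod D1 D2) <= C.
Definition h_le (n C : nat) : Prop :=
  exists D1 D2 : digraph, n <= dchi D1 /\ n <= dchi D2 /\
    maxn (dchi (dprod D1 D2)) (dchi (dprod D1 (drev D2))) <= C.

(* Main.v *)
Require Import Defs.
From mathcomp Require Import all_boot.

Set Implicit Arguments. Unset Strict Implicit. Unset Printing Implicit Defensive.
Section Aux.

Lemma uchi_col (T : finType) (e : rel T) (irr : irreflexive e) :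
  ucolorable e (uchi irr).
Proof. by rewrite /uchi; case: ex_minnP. Qed.

Lemma uchi_le (T : finType) (e : rel T) (irr : irreflexive e) k :
  ucolorable e k -> uchi irr <= k.
Proof. by rewrite /uchi; case: ex_minnP => m _ H /H. Qed.

Lemma col_le (T : finType) (e : rel T) k k' :
  ucolorable e k -> k <= k' -> ucolorable e k'.
Proof.
move=> /existsP [c /forallP Hc] kk; apply/existsP.
exists [ffun x => widen_ord kk (c x)].
apply/forallP=> x; apply/forallP=> y; apply/implyP=> exy.
rewrite !ffunE; move: (forallP (Hc x) y) => /implyP /(_ exy).
by apply: contra => /eqP [] E; apply/eqP/val_inj.
Qed.

Lemma col_hom (T T' : finType) (e : rel T) (e' : rel T') (f : T -> T') k :
  (forall x y, e x y -> e' (f x) (f y)) -> ucolorable e' k -> ucolorable e k.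
Proof.
move=> hf /existsP [c /forallP Hc]; apply/existsP.
exists [ffun x => c (f x)].
apply/forallP=> x; apply/forallP=> y; apply/implyP=> exy.
rewrite !ffunE; move: (forallP (Hc (f x)) (f y)) => /implyP; apply.
by case/orP: exy => [/hf -> | /hf ->] //; rewrite orbT.
Qed.

Lemma col_fin (T K : finType) (e : rel T) (c : T -> K) :
  (forall x y, e x y -> c x != c y) -> ucolorable e #|K|.
Proof.
move=> hc; apply/existsP; exists [ffun x => enum_rank (c x)].
apply/forallP=> x; apply/forallP=> y; apply/implyP=> exy.
rewrite !ffunE (inj_eq enum_rank_inj).
by case/orP: exy => [/hc // | /hc]; rewrite eq_sym.
Qed.

Lemma col_ext (T : finType) (e e' : rel T) k :
  (forall x y, e x y || e y x = e' x y || e' y x) ->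
  ucolorable e k -> ucolorable e' k.
Proof.
move=> H /existsP [c /forallP Hc]; apply/existsP; exists c.
apply/forallP=> x; apply/forallP=> y; rewrite -H; exact: (forallP (Hc x) y).
Qed.

Lemma uchi_ext (T : finType) (e e' : rel T) (irr : irreflexive e)
  (irr' : irreflexive e') :
  (forall x y, e x y || e y x = e' x y || e' y x) -> uchi irr = uchi irr'.
Proof.
move=> H; apply/eqP; rewrite eqn_leq; apply/andP; split; apply: uchi_le.
- apply: (@col_ext T e' e (uchi irr')); last exact: uchi_col.
  by move=> x y; rewrite H.
- exact: (col_ext H (uchi_col irr)).
Qed.

End Aux.

Definition arcT (D : digraph) : finType :=
  {x : (dvert D * dvert D)%type | darc x.1 x.2}.
Definition arc_rel (D : digraph) : rel (arcT D) :=
  fun a b => (val a).2 == (val b).1.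
Lemma arc_irr (D : digraph) : irreflexive (@arc_rel D).
Proof.
move=> [[u v] h]; rewrite /arc_rel /=; apply/negbTE/eqP => E.
by move: h; rewrite /= E darc_irr.
Qed.
Definition arcD (D : digraph) : digraph := @Digraph (arcT D) (@arc_rel D) (@arc_irr D).

Lemma card_setT (k : nat) : #|{set 'I_k}| = 2 ^ k.
Proof. by rewrite -cardsT -powersetT card_powerset cardsT card_ord. Qed.

Lemma arc_low (D : digraph) k :
  ucolorable (@darc (arcD D)) k -> ucolorable (@darc D) (2 ^ k).
Proof.
move=> /existsP [c /forallP Hc].
have Hc' : forall a b : arcT D, arc_rel a b -> c a != c b.
  move=> a b ab; move: (forallP (Hc a) b) => /implyP; apply.
  by rewrite /= ab.
rewrite -card_setT.
pose S (v : dvert D) : {set 'I_k} :=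
  [set i | [exists a : arcT D, ((val a).2 == v) && (c a == i)]].
apply: (col_fin (c := S)) => v w evw.
pose a0 : arcT D := exist _ (v, w) evw.
have inw : c a0 \in S w by rewrite inE; apply/existsP; exists a0; rewrite /= !eqxx.
have ninv : c a0 \notin S v.
  rewrite inE; apply/existsP => -[a /andP [/eqP av /eqP ca]].
  have : arc_rel a a0 by rewrite /arc_rel av.
  by move/Hc'; rewrite ca eqxx.
by apply/eqP => E; move: ninv; rewrite E inw.
Qed.

Lemma dchi_arc (D : digraph) : dchi D <= 2 ^ dchi (arcD D).
Proof. apply: uchi_le; apply: arc_low; exact: uchi_col. Qed.

Lemma bin2_ge k : k.+4.+1 <= 'C(k.+4, 2).
Proof.
elim: k => [//|k IH]; rewrite binS bin1.
by apply: leq_trans (leq_add IH (leqnn _)); rewrite addnS addSn !ltnS leq_addr.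
Qed.

Lemma family k : exists A : 'I_k.+4.+1 -> {set 'I_k.+4},
  injective A /\ forall i, #|A i| = 2.
Proof.
pose S := [set X : {set 'I_k.+4} | #|X| == 2].
have hS : k.+4.+1 <= #|S| by rewrite card_draws card_ord bin2_ge.
exists (fun i => enum_val (widen_ord hS i)); split.
- by move=> i j /enum_val_inj /(congr1 val) /= /val_inj.
- by move=> i; have := enum_valP (widen_ord hS i); rewrite inE => /eqP.
Qed.

Lemma arc_up (D : digraph) k :
  ucolorable (@darc D) k.+4.+1 -> ucolorable (@darc (arcD D)) k.+4.
Proof.
move=> /existsP [c /forallP Hc].
have Hc' : forall u v : dvert D, darc u v -> c u != c v.
  move=> u v uv; move: (forallP (Hc u) v) => /implyP; apply.
  by rewrite uv.
have [A [Ainj Acard]] := family k.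
have ne : forall i j, i != j -> exists x, x \in A i :\: A j.
  move=> i j ij; apply/set0Pn; apply: contra ij; rewrite setD_eq0 => sub.
  apply/eqP/Ainj/eqP.
  by rewrite eqEcard sub !Acard.
pose col (a : arcT D) : 'I_k.+4 :=
  odflt ord0 [pick x in A (c (val a).1) :\: A (c (val a).2)].
have colP : forall a : arcT D, col a \in A (c (val a).1) :\: A (c (val a).2).
  move=> a; rewrite /col; case: pickP => [x -> //|H].
  have [x Hx] := ne _ _ (Hc' _ _ (valP a)).
  by move: (H x); rewrite Hx.
apply: col_le (leqnn _) => //.
rewrite -[k.+4]card_ord; apply: (col_fin (c := col)) => a b ab.
move: (colP a) (colP b); rewrite /arc_rel in ab; rewrite -(eqP ab).
move=> /setDP [_ na] /setDP [inb _]; apply/eqP => E.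
by move: na; rewrite E inb.
Qed.

Lemma pr_arc1 (D1 D2 : digraph) (a : arcT D1) (b : arcT D2) :
  @darc (dprod D1 D2) ((val a).1, (val b).1) ((val a).2, (val b).2).
Proof. by rewrite /= /prod_rel /= (valP a) (valP b). Qed.

Lemma pr_arc2 (D1 D2 : digraph) (a : arcT D1) (b : arcT D2) :
  @darc (dprod D1 (drev D2)) ((val a).1, (val b).2) ((val a).2, (val b).1).
Proof. by rewrite /= /prod_rel /= (valP a) (valP b). Qed.

Definition phi1 (D1 D2 : digraph) (p : arcT D1 * arcT D2) : arcT (dprod D1 D2) :=
  exist (fun x => @darc (dprod D1 D2) x.1 x.2)
    (((val p.1).1, (val p.2).1), ((val p.1).2, (val p.2).2)) (pr_arc1 p.1 p.2).
Definition phi2 (D1 D2 : digraph) (p : arcT D1 * arcT D2) : arcT (dprod D1 (drev D2)) :=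
  exist (fun x => @darc (dprod D1 (drev D2)) x.1 x.2)
    (((val p.1).1, (val p.2).2), ((val p.1).2, (val p.2).1)) (pr_arc2 p.1 p.2).

Lemma hom1 (D1 D2 : digraph) m :
  ucolorable (@darc (arcD (dprod D1 D2))) m ->
  ucolorable (@darc (dprod (arcD D1) (arcD D2))) m.
Proof.
apply: (col_hom (f := @phi1 D1 D2)).
move=> [a b] [a' b'] /andP [/eqP h1 /eqP h2].
by rewrite /= /arc_rel /= h1 h2.
Qed.

Lemma hom2 (D1 D2 : digraph) m :
  ucolorable (@darc (arcD (dprod D1 (drev D2)))) m ->
  ucolorable (@darc (dprod (arcD D1) (drev (arcD D2)))) m.
Proof.
apply: (col_hom (f := @phi2 D1 D2)).
move=> [a b] [a' b'] /andP [/eqP h1 /eqP h2].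
by rewrite /= /arc_rel /= h1 h2.
Qed.

Lemma arc_big (D : digraph) n : 2 ^ n <= dchi D -> n <= dchi (arcD D).
Proof.
move=> h; rewrite -(@leq_exp2l 2) //; exact: leq_trans h (dchi_arc D).
Qed.

Lemma arc_prod_le (D : digraph) (D' : digraph) k
  (f : ucolorable (@darc (arcD D)) k.+4 -> ucolorable (@darc D') k.+4) :
  dchi D <= k.+4.+1 -> dchi D' <= k.+4.
Proof.
move=> h; apply: uchi_le; apply: f; apply: arc_up; exact: col_le (uchi_col _) h.
Qed.

Lemma g_step k : (forall n, g_le n k.+4.+1) -> forall n, g_le n k.+4.
Proof.
move=> H n; have [D1 [D2 [h1 [h2 h3]]]] := H (2 ^ n).
exists (arcD D1), (arcD D2); split; [exact: arc_big|split; first exact: arc_big].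
exact: arc_prod_le (@hom1 D1 D2 _) h3.
Qed.

Lemma h_step k : (forall n, h_le n k.+4.+1) -> forall n, h_le n k.+4.
Proof.
move=> H n; have [D1 [D2 [h1 [h2 h3]]]] := H (2 ^ n).
move: h3; rewrite geq_max => /andP [h3 h4].
exists (arcD D1), (arcD D2); split; [exact: arc_big|split; first exact: arc_big].
rewrite geq_max; apply/andP; split.
- exact: arc_prod_le (@hom1 D1 D2 _) h3.
- exact: arc_prod_le (@hom2 D1 D2 _) h4.
Qed.

Lemma g_main C : (forall n, g_le n C) -> forall n, g_le n 4.
Proof.
elim: C => [|C IH] H n.
  by have [D1 [D2 [h1 [h2 h3]]]] := H n; exists D1, D2; split=> //; split=> //; exact: leq_trans h3 _.
case: (leqP C.+1 4) => [le|gt].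
  by have [D1 [D2 [h1 [h2 h3]]]] := H n; exists D1, D2; split=> //; split=> //; exact: leq_trans h3 le.
have E : C = (C - 4).+4 by rewrite -addn4 subnK.
by apply: IH; rewrite E; apply: g_step; rewrite -E.
Qed.

Lemma h_main C : (forall n, h_le n C) -> forall n, h_le n 4.
Proof.
elim: C => [|C IH] H n.
  by have [D1 [D2 [h1 [h2 h3]]]] := H n; exists D1, D2; split=> //; split=> //; exact: leq_trans h3 _.
case: (leqP C.+1 4) => [le|gt].
  by have [D1 [D2 [h1 [h2 h3]]]] := H n; exists D1, D2; split=> //; split=> //; exact: leq_trans h3 le.
have E : C = (C - 4).+4 by rewrite -addn4 subnK.
by apply: IH; rewrite E; apply: h_step; rewrite -E.
Qed.

Definition D_of (G : graph) : digraph := @Digraph (gvert G) (@gadj G) (@gadj_irr G).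

Lemma f_to_h n C : f_le n C -> h_le n C.
Proof.
move=> [G [H [h1 [h2 h3]]]]; exists (D_of G), (D_of H); do 2!split=> //.
have E : dchi (dprod (D_of G) (drev (D_of H))) = gchi (gprod G H).
  apply: uchi_ext => x y; rewrite /= /prod_rel /= (@gadj_sym H x.2 y.2) (@gadj_sym H y.2 x.2).
  by rewrite orbC.
by rewrite E geq_max h3.
Qed.

Lemma G_irr (D : digraph) : irreflexive (fun x y => @darc D x y || darc y x).
Proof. by move=> x; rewrite darc_irr. Qed.
Lemma G_sym (D : digraph) : symmetric (fun x y => @darc D x y || darc y x).
Proof. by move=> x y; rewrite orbC. Qed.
Definition G_of (D : digraph) : graph := @Graph (dvert D) _ (@G_irr D) (@G_sym D).

Lemma gchi_G (D : digraph) : gchi (G_of D) = dchi D.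
Proof. by apply: uchi_ext => x y /=; rewrite [darc y x || _]orbC orbb. Qed.

Lemma gprod_le (D1 D2 : digraph) :
  gchi (gprod (G_of D1) (G_of D2)) <=
  dchi (dprod D1 D2) * dchi (dprod D1 (drev D2)).
Proof.
apply: uchi_le.
move: (uchi_col (@darc_irr (dprod D1 D2))) => /existsP [c1 /forallP H1].
move: (uchi_col (@darc_irr (dprod D1 (drev D2)))) => /existsP [c2 /forallP H2].
rewrite -[X in X * _]card_ord -[X in _ * X]card_ord -card_prod.
apply: (col_fin (c := fun x => (c1 x, c2 x))) => [[x y]] [x' y'].
rewrite /= /prod_rel /= => /andP [a b].
have K1 : forall u v, (@darc (dprod D1 D2) u v || @darc (dprod D1 D2) v u) -> c1 u != c1 v.
  by move=> u v; apply/implyP; exact: (forallP (H1 u) v).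
have K2 : forall u v, (@darc (dprod D1 (drev D2)) u v || @darc (dprod D1 (drev D2)) v u) -> c2 u != c2 v.
  by move=> u v; apply/implyP; exact: (forallP (H2 u) v).
apply/negP => /eqP [E1 E2].
case/orP: a => a; case/orP: b => b.
- by move: (K1 (x, y) (x', y')); rewrite E1 eqxx /= /prod_rel /= a b => /(_ isT).
- by move: (K2 (x, y) (x', y')); rewrite E2 eqxx /= /prod_rel /= a b => /(_ isT).
- by move: (K2 (x, y) (x', y')); rewrite E2 eqxx /= /prod_rel /= a b orbT => /(_ isT).
- by move: (K1 (x, y) (x', y')); rewrite E1 eqxx /= /prod_rel /= a b orbT => /(_ isT).
Qed.

Theorem theorem10 :
  ((exists C, forall n, g_le n C) -> forall n, g_le n 4) /\
  ((exists C, forall n, h_le n C) -> forall n, h_le n 4) /\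
  ((exists C, forall n, f_le n C) -> forall n, f_le n 16).
Proof.
split; first by move=> [C H]; exact: g_main H.
split; first by move=> [C H]; exact: h_main H.
move=> [C H] n.
have [D1 [D2 [h1 [h2 h3]]]] := h_main (fun m => f_to_h (H m)) n.
move: h3; rewrite geq_max => /andP [h3 h4].
exists (G_of D1), (G_of D2); rewrite !gchi_G; do 2!split=> //.
apply: leq_trans (gprod_le D1 D2) _.
exact: (leq_mul h3 h4).
Qed.
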